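(* Let $q$ be a prime power, let $G$ be an abelian group with $|G|=(q+1)(q^2+1)$, and let $D$ be a normalized difference set in $G$ with parameters $\left((q+1)(q^2+1),\,q^2+q+1,\,q+1\right)$. Then: (1) there is a unique subgroup $K$ of order $q^2+1$ in $G$; (2) for exactly one coset $Kx$ of $K$ in $G$ we have $|D\cap Kx|=1$, and $|D\cap Kx|=q+1$ for each of the other $q$ cosets of $K$.
   Context: A $(v,k,\lambda)$-difference set in an abelian group $G$ of order $v$ is a $k$-subset $D$ such that every non-identity element of $G$ is of the form $d_1d_2^{-1}$ with $d_1,d_2\in D$ in exactly $\lambda$ ways. It is normalized if $\prod_{d\in D}d=1$. *)

(* Defs.v *)
From mathcomp Require Import all_boot all_fingroup.
Set Implicit Arguments. Unset Strict Implicit. Unset Printing Implicit Defensive.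
Local Open Scope group_scope.

Definition prime_power (q : nat) : Prop :=
  exists p n : nat, prime p /\ (0 < n)%N /\ q = (p ^ n)%N.

Definition difference_set (gT : finGroupType) (G : {group gT}) (D : {set gT})
    (v k lam : nat) : Prop :=
  [/\ #|G| = v, D \subset G, #|D| = k &
      forall g, g \in G -> g != 1 ->
        #|[set p in setX D D | p.1 * p.2^-1 == g]| = lam].

Definition normalized (gT : finGroupType) (D : {set gT}) : Prop :=
  \prod_(d in D) d = 1.

(* Submission.v *)
Require Import Defs.
From mathcomp Require Import all_boot all_fingroup.
From mathcomp Require Import all_algebra all_field all_solvable.
From mathcomp Require Import zify ring lra.
Set Warnings "-notation-overridden,-ambiguous-paths".

Module DevCore.
Set Implicit Arguments. Unset Strict Implicit. Unset Printing Implicit Defensive.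
Import GRing.Theory Num.Theory.
Local Open Scope ring_scope.

Lemma frob_sum (R : nzRingType) (p : nat) (pr : p \in [pchar R]) (I : eqType)
   (r : seq I) (X : I -> R) :
  {in r &, forall i j, GRing.comm (X i) (X j)} ->
  (\sum_(i <- r) X i) ^+ p = \sum_(i <- r) X i ^+ p.
Proof.
elim: r => [|a r IH] cr.
  by rewrite !big_nil expr0n; case/andP: pr => /prime_gt0; case: p.
rewrite !big_cons -IH; last by move=> i j ir jr; apply: cr; rewrite inE ?ir ?jr orbT.
rewrite -!(pFrobenius_autE pr) pFrobenius_autD_comm //.
rewrite big_seq; apply: commr_sum => i ir; apply: cr; rewrite inE ?ir ?eqxx ?orbT //.
Qed.

Section Core.
Variables (T : finGroupType) (H : {group T}) (p : nat).
Hypothesis pr_p : prime p.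
Local Notation F := 'F_p.

Let N := #|T|.-1.
Let eqN : N.+1 = #|T|. Proof. by rewrite /N prednK //; apply/card_gt0P; exists 1%g. Qed.
Definition tv (i : 'I_N.+1) : T := enum_val (cast_ord eqN i).
Definition ti (x : T) : 'I_N.+1 := cast_ord (esym eqN) (enum_rank x).
Lemma tvK : cancel tv ti.
Proof. by move=> i; rewrite /tv /ti enum_valK; apply: val_inj. Qed.
Lemma tiK : cancel ti tv.
Proof. move=> x; rewrite /tv /ti; set y := cast_ord _ _.
have -> : y = enum_rank x by apply: val_inj. exact: enum_rankK. Qed.

Definition P (h : T) : 'M[F]_N.+1 := \matrix_(i, j) ((tv i == h * tv j)%g%:R).

Lemma PM h k : P h * P k = P (h * k)%g.
Proof.
apply/matrixP => i j; rewrite -mulmxE !mxE (bigD1 (ti (k * tv j)%g)) //= !mxE tiK.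
rewrite eqxx mulr1 mulgA big1 ?addr0 // => l /negbTE nl; rewrite !mxE.
case: (eqVneq (tv l) (k * tv j)%g) => [el|]; last by rewrite mulr0.
by rewrite -el tvK eqxx in nl.
Qed.

Lemma P1 : P 1%g = 1.
Proof.
apply/matrixP => i j; rewrite !mxE mul1g.
by rewrite (inj_eq (can_inj tvK)).
Qed.

Lemma PX h m : P h ^+ m = P (h ^+ m)%g.
Proof. elim: m => [|m IH]; first by rewrite P1. by rewrite exprS IH PM expgS. Qed.

Lemma PT h : (P h)^T = P (h^-1)%g.
Proof.
apply/matrixP => i j; rewrite !mxE.
congr ((nat_of_bool _)%:R); apply/idP/idP => /eqP E; apply/eqP; rewrite E ?mulKg ?mulKVg //.
Qed.

Variable c : T -> F.

Definition B (f : T -> T) := \sum_(h in H) c h *: P (f h).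

Lemma pchar_M : p \in [pchar 'M[F]_N.+1].
Proof. by rewrite pchar_lalg pchar_Fp. Qed.

Hypothesis abH : abelian H.

Lemma B_frob (f : T -> T) : {in H, forall h, f h \in H} ->
  B f ^+ p = B (fun h => f h ^+ p)%g.
Proof.
move=> fH; rewrite /B -big_enum frob_sum; first last.
  move=> i j; rewrite !mem_enum => iH jH.
  rewrite /GRing.comm -!scalerAl -!scalerAr !PM scalerA mulrC -scalerA.
  by rewrite (centsP abH (f i)) ?fH.
  exact: pchar_M.
rewrite big_enum; apply: eq_bigr => h _.
have fe : forall x : F, x ^+ p = x by move=> x; have := expf_card x; rewrite card_Fp.
by rewrite exprZn PX fe.
Qed.

Lemma B_frobX (m : nat) : B id ^+ (p ^ m) = B (fun h => h ^+ (p ^ m))%g.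
Proof.
elim: m => [|m IH]; first by rewrite expn0 expr1; apply: eq_bigr => h _; rewrite expg1.
rewrite expnSr exprM IH B_frob; last by move=> h hH; rewrite groupX.
by apply: eq_bigr => h _; rewrite expgM.
Qed.


Definition A := B id.

Lemma AT : A^T = B (fun h => h^-1)%g.
Proof.
rewrite /A /B raddf_sum; apply: eq_bigr => h _.
by rewrite -PT; apply/matrixP => i j; rewrite !mxE.
Qed.

Definition R (z : T) := \sum_(h in H) c h * c (z^-1 * h)%g.

Lemma AAT : A * A^T = \sum_(z in H) R z *: P z.
Proof.
rewrite AT /A /B mulr_suml.
have -> : \sum_(h in H) (c h *: P h) * (\sum_(k in H) c k *: P k^-1)%g =
   \sum_(h in H) \sum_(z in H) (c h * c (z^-1 * h)%g) *: P z.
  apply: eq_bigr => h hH; rewrite mulr_sumr.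
  have finj : injective (fun z : T => z^-1 * h)%g.
    by move=> x y /mulIg /invg_inj.
  rewrite (reindex_inj finj) /=; apply: eq_big => [z|z zH].
    by rewrite groupMr // groupV.
  rewrite -scalerAl -scalerAr PM scalerA; congr (_ *: P _).
  by rewrite invMg invgK mulgA mulgV mul1g.
rewrite exchange_big /=; apply: eq_bigr => z zH.
by rewrite /R scaler_suml.
Qed.


Variable n : nat.
Hypothesis n_gt0 : (0 < n)%N.
Hypothesis expH : forall h, h \in H -> (h ^+ (p ^ n).+1 = 1)%g.
Hypothesis R0 : forall z, z \in H -> R z = 0.

Lemma A0 : A = 0.
Proof.
set q := (p ^ n)%N.
have hq : forall h, h \in H -> (h ^+ q = h^-1)%g.
  move=> h hH; have := expH hH; rewrite expgSr => /(canRL (mulgK h)).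
  by rewrite mul1g.
have Aq : A ^+ q = A^T.
  rewrite /A B_frobX AT; apply: eq_bigr => h hH; by rewrite /= hq.
have Aqq : A ^+ (q * q) = A.
  rewrite /q -expnD /A B_frobX; apply: eq_bigr => h hH.
  by rewrite /= expnD -/q expgM (hq h hH) expgVn (hq h hH) invgK.
have AA : A ^+ q.+1 = 0.
  by rewrite exprS Aq AAT big1 // => z zH; rewrite R0 // scale0r.
have q2 : (1 < q)%N.
  apply: leq_trans (prime_gt1 pr_p) _.
  by rewrite -{1}(expn1 p) leq_pexp2l // prime_gt0.
have qle : (q.+1 <= q * q)%N by nia.
by rewrite -Aqq -(subnKC qle) exprD AA mul0r.
Qed.

Lemma c0 h : h \in H -> c h = 0.
Proof.
move=> hH; have := congr1 (fun M : 'M[F]_N.+1 => M (ti h) (ti 1%g)) A0.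
rewrite /A /B summxE (bigD1 h) //= !mxE !tiK mulg1 eqxx mulr1 big1 ?addr0 //.
move=> k /andP [_ nk].
by rewrite !mxE !tiK mulg1 eq_sym (negbTE nk) mulr0.
Qed.

End Core.

Lemma PoszX (m k : nat) : Posz (m ^ k)%N = (Posz m) ^+ k.
Proof. by rewrite -!natz natrX. Qed.

Section Int.
Variables (T : finGroupType) (H : {group T}) (p n : nat).
Hypothesis pr_p : prime p.
Hypothesis n_gt0 : (0 < n)%N.
Hypothesis abH : abelian H.
Hypothesis expH : forall h, h \in H -> (h ^+ (p ^ n).+1 = 1)%g.

Definition Rz (e : T -> int) (z : T) := \sum_(h in H) e h * e (z^-1 * h)%g.

Lemma divp e : (forall z, z \in H -> (p %| Rz e z)%Z) ->
  forall h, h \in H -> (p %| e h)%Z.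
Proof.
move=> hR h hH.
have chF := pchar_Fp pr_p.
rewrite (dvdz_pcharf chF); apply/eqP.
apply: (@c0 T H p pr_p (fun x => (e x)%:~R) abH n n_gt0 expH) => // z zH.
have := hR z zH; rewrite (dvdz_pcharf chF) => /eqP <-.
rewrite /R /Rz (big_morph (fun x : int => x%:~R : 'F_p) (@intrD _) (mulr0z 1)).
by apply: eq_bigr => k _; rewrite intrM.
Qed.

Lemma sq1 (e : T -> int) : \sum_(h in H) e h * e h = 1 ->
  exists2 x, x \in H & (forall h, h \in H -> h != x -> e h = 0) /\ e x ^+ 2 = 1.
Proof.
move=> hs.
have [x /andP [xH ex]|none] := pickP (fun x => (x \in H) && (e x != 0)).
  exists x => //.
  move: hs; rewrite (bigD1 x) //= => hs.
  have ge : 0 <= \sum_(h in H | h != x) e h * e h.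
    by apply: sumr_ge0 => h _; rewrite -expr2 sqr_ge0.
  have exx : 1 <= e x * e x.
    by rewrite -expr2; move: ex; lia.
  have [r0 r1] : \sum_(h in H | h != x) e h * e h = 0 /\ e x * e x = 1.
    by move: hs ge exx; set a := e x * e x; set b := \sum_(_ in _ | _) _; lia.
  split; last by rewrite expr2.
  have nn : forall i, (i \in H) && (i != x) -> 0 <= e i * e i.
    by move=> i _; rewrite -expr2 sqr_ge0.
  move=> h hH hx; have := psumr_eq0P nn r0 (i := h).
  rewrite hH hx => /(_ isT) /eqP.
  by rewrite mulf_eq0 orbb => /eqP.
exfalso; move: hs; rewrite big1 // => h hH.
by have := none h; rewrite hH /= => /negbFE /eqP ->; rewrite mulr0.
Qed.


Lemma coreZ j : forall e : T -> int,
  (forall z, z \in H -> Rz e z = if z == 1%g then (p ^ (2 * j))%:Z else 0) ->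
  exists2 x, x \in H & (forall h, h \in H -> h != x -> e h = 0) /\
     e x ^+ 2 = (p ^ (2 * j))%:Z.
Proof.
elim: j => [|j IH] e hR.
  apply: sq1; have := hR 1%g (group1 H); rewrite eqxx /Rz.
  by under eq_bigr => h _ do rewrite invg1 mul1g.
have dv : forall h, h \in H -> (p %| e h)%Z.
  apply: divp => z zH; rewrite hR //; case: ifP => _; last exact: dvdz0.
  by rewrite dvdzE /= dvdn_exp // muln_gt0.
pose e' h := (e h %/ p)%Z.
have ee : forall h, h \in H -> e h = e' h * p by move=> h hH; rewrite divzK // dv.
have pn0 : (p%:Z) ^+ 2 != 0.
  by rewrite expf_eq0 /= eqz_nat; case: p pr_p.
have hR' : forall z, z \in H -> Rz e' z = if z == 1%g then (p ^ (2 * j))%:Z else 0.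
  move=> z zH; apply: (mulIf pn0).
  have -> : Rz e' z * p%:Z ^+ 2 = Rz e z.
    rewrite /Rz mulr_suml; apply: eq_bigr => h hH.
    rewrite (ee h hH) (ee (z^-1 * h)%g) ?groupM ?groupV //; ring.
  rewrite hR //; case: ifP => _; last by rewrite mul0r.
  by rewrite -PoszX -PoszM -expnD; congr (Posz (expn _ _)); lia.
have [x xH [hx ex]] := IH e' hR'.
exists x => //; split.
  by move=> h hH hne; rewrite ee // hx // mul0r.
rewrite ee // exprMn ex -PoszX -PoszM -expnD; congr (Posz (expn _ _)); lia.
Qed.

End Int.

End DevCore.
Import DevCore.

Module Pat.
Set Implicit Arguments. Unset Strict Implicit. Unset Printing Implicit Defensive.
Import GRing.Theory Num.Theory.
Local Open Scope group_scope.

Lemma card_cond (T : finType) (A : {pred T}) (P : pred T) :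
  #|[set x in A | P x]| = (\sum_(x in A) P x)%N.
Proof.
rewrite -sum1_card big_mkcond [RHS]big_mkcond /=; apply: eq_bigr => x _.
by rewrite inE; case: (x \in A); case: (P x).
Qed.

Lemma cardI_sum (T : finType) (A B : {set T}) :
  #|A :&: B| = (\sum_(x in A) (x \in B))%N.
Proof.
rewrite -card_cond; apply: eq_card => x; by rewrite !inE.
Qed.

Lemma card_pairs (gT : finGroupType) (D : {set gT}) g :
  #|[set x in setX D D | x.1 * x.2^-1 == g]| =
  (\sum_(d1 in D) \sum_(d2 in D) ((d1 * d2^-1)%g == g))%N.
Proof.
rewrite card_cond pair_big /=; apply: eq_bigl => -[x1 x2]; by rewrite in_setX.
Qed.

Lemma eq_mulV (gT : finGroupType) (x y z : gT) :
  (x * y^-1 == z) = (y == z^-1 * x).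
Proof.
apply/idP/idP => /eqP E; apply/eqP.
  by rewrite -E invMg invgK mulgKV.
by rewrite E invMg invgK mulKVg.
Qed.

Section Pattern.
Variables (gT : finGroupType) (G U : {group gT}) (D : {set gT}) (p n t : nat).
Hypothesis pr_p : prime p.
Hypothesis n_gt0 : (0 < n)%N.
Hypothesis abG : abelian G.
Hypothesis sUG : U \subset G.
Hypothesis sDG : D \subset G.
Let q := (p ^ n)%N.
Hypothesis cardD : #|D| = (q ^ 2 + q + 1)%N.
Hypothesis diff : forall g, g \in G -> g != 1 ->
  #|[set x in setX D D | x.1 * x.2^-1 == g]| = (q + 1)%N.
Hypothesis expU : forall g, g \in G -> g ^+ (q + 1) \in U.
Hypothesis ht : (t * #|G : U| = (q + 1) ^ 2)%N.
Hypothesis cardG : #|G| = ((q + 1) * (q ^ 2 + 1))%N.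

Let nUG : G \subset 'N(U) := sub_abelian_norm abG sUG.
Let H := (G / U)%G.
Definition a (c : coset_of U) : nat := (\sum_(d in D) (coset U d == c))%N.

Let GN g : g \in G -> g \in 'N(U). Proof. exact: (subsetP nUG). Qed.
Let DG d : d \in D -> d \in G. Proof. exact: (subsetP sDG). Qed.
Let cosetD d : d \in D -> coset U d \in H.
Proof. by move=> dD; apply: mem_quotient; apply: DG. Qed.

Lemma sum_a : (\sum_(c in H) a c)%N = #|D|.
Proof.
rewrite /a exchange_big /= -sum1_card; apply: eq_bigr => d dD.
rewrite (bigD1 (coset U d)) ?cosetD //= eqxx big1 // => c /andP [_ nc].
by rewrite eq_sym (negbTE nc).
Qed.

Lemma fiber z : z \in H -> #|[set g in G | coset U g == z]| = #|U|.
Proof.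
case/morphimP => g0 g0N g0G ->.
rewrite -(card_rcoset U g0); apply: eq_card => g; rewrite !inE.
apply/andP/idP => [[gG /eqP E] | gU].
  by apply/rcoset_kercosetP => //; apply: GN.
have gG : g \in G.
  have : g * g0^-1 \in G by rewrite -mem_rcoset (subsetP _ _ gU) // rcosetS.
  by rewrite groupMr // groupV.
by split => //; apply/eqP/rcoset_kercosetP => //; apply: GN.
Qed.


Lemma Npair g : g \in G ->
  (\sum_(d1 in D) \sum_(d2 in D) ((d1 * d2^-1)%g == g))%N = (q + 1 + (g == 1%g) * q ^ 2)%N.
Proof.
move=> gG; rewrite -card_pairs.
have [->|ng] := eqVneq g 1; last by rewrite diff // mul0n addn0.
rewrite card_pairs mul1n.
transitivity (\sum_(d1 in D) 1)%N; last by rewrite sum1_card cardD; lia.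
apply: eq_bigr => d1 d1D; rewrite (bigD1 d1) //= mulgV eqxx big1 // => d2 /andP [_ nd].
by rewrite -eq_mulgV1 eq_sym (negbTE nd).
Qed.

Lemma auto z : z \in H ->
  (\sum_(c in H) a c * a (z^-1 * c))%N = ((q + 1) * #|U| + (z == 1%g) * q ^ 2)%N.
Proof.
move=> zH.
transitivity (\sum_(d1 in D) \sum_(d2 in D) (coset U (d1 * d2^-1)%g == z))%N.
  transitivity (\sum_(c in H) \sum_(d1 in D) \sum_(d2 in D)
     ((coset U d1 == c) * (coset U d2 == (z^-1 * c)%g)))%N.
    apply: eq_bigr => c _; rewrite /a big_distrl; apply: eq_bigr => d1 _.
    by rewrite big_distrr.
  rewrite exchange_big; apply: eq_bigr => d1 d1D; rewrite exchange_big.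
  apply: eq_bigr => d2 d2D.
  rewrite (bigD1 (coset U d1)) ?cosetD //= eqxx mul1n big1 ?addn0.
    by rewrite morphM ?morphV ?groupV ?GN ?DG // eq_mulV.
  by move=> c /andP [_ nc]; rewrite eq_sym (negbTE nc).
transitivity (\sum_(g in G | coset U g == z)
   \sum_(d1 in D) \sum_(d2 in D) ((d1 * d2^-1)%g == g))%N.
  rewrite [RHS]exchange_big; apply: eq_bigr => d1 d1D; rewrite [RHS]exchange_big.
  apply: eq_bigr => d2 d2D.
  have wG : d1 * d2^-1 \in G by rewrite groupM ?groupV ?DG.
  case: eqP => [E|E].
    rewrite (bigD1 (d1 * d2^-1)) /= ?wG ?E ?eqxx // big1 // => g /andP [_ ng].
    by rewrite eq_sym (negbTE ng).
  rewrite big1 // => g /andP [_ /eqP gz]; case: eqP => // wg.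
  by case: E; rewrite wg.
rewrite (eq_bigr (fun g => (q + 1 + (g == 1%g) * q ^ 2)%N)); last first.
  by move=> g /andP [gG _]; rewrite Npair.
rewrite big_split /= sum_nat_const -big_distrl /=.
have -> : #|(fun i : gT => (i \in G) && (coset U i == z))| = #|[set g in G | coset U g == z]|.
  by apply: eq_card => g; rewrite !inE.
rewrite fiber // mulnC; congr (_ + _)%N; congr (_ * _)%N.
have [->|nz] := eqVneq z 1.
  rewrite (bigD1 1) //= ?group1 ?morph1 ?eqxx // big1 // => g /andP [_ ng].
  by rewrite (negbTE ng).
rewrite big1 // => g /andP [_ gz]; case: eqP => // g1.
by move: gz nz; rewrite g1 morph1 => /eqP <-; rewrite eqxx.
Qed.


Theorem pattern : exists2 x, x \in G & forall y, y \in G ->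
  (#|D :&: U :* y| + q * (U :* y == U :* x) = t)%N.
Proof.
set m := #|G : U|.
have cH : #|H| = m by rewrite card_quotient.
have Lag : (#|U| * m = #|G|)%N by rewrite Lagrange.
have m_gt0 : (0 < m)%N by rewrite -cH cardG_gt0.
pose e (c : coset_of U) : int := (Posz (a c) - Posz t)%R.
have abH : abelian H by apply: quotient_abelian.
have expH : forall h, h \in H -> h ^+ (p ^ n).+1 = 1.
  move=> h; case/morphimP => g gN gG ->.
  by rewrite -morphX //= coset_id // -addn1 expU.
have key : ((q + 1) * #|U| + t * t * m = 2 * t * (q ^ 2 + q + 1))%N.
  apply/eqP; rewrite -(eqn_pmul2r m_gt0); apply/eqP.
  have E1 : ((q + 1) * #|U| * m = (q + 1) * ((q + 1) * (q ^ 2 + 1)))%N.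
    by rewrite -mulnA Lag cardG.
  have E2 : (t * t * m * m = (q + 1) ^ 2 * (q + 1) ^ 2)%N.
    by rewrite -ht; ring.
  have E3 : (2 * t * (q ^ 2 + q + 1) * m = 2 * (q + 1) ^ 2 * (q ^ 2 + q + 1))%N.
    by rewrite -ht; ring.
  rewrite mulnDl E1 E2 E3; ring.
have hR : forall z, z \in H ->
    Rz H e z = if z == 1 then Posz (p ^ (2 * n)) else 0%R.
  move=> z zH.
  have sh : (\sum_(c in H) a (z^-1 * c))%N = (\sum_(c in H) a c)%N.
    have finj : injective (fun c : coset_of U => z^-1 * c) by apply: mulgI.
    rewrite [RHS](reindex_inj finj) /=; apply: eq_bigl => c.
    by rewrite groupMl ?groupV.
  have -> : Rz H e z = (Posz (\sum_(c in H) (a c * a (z^-1 * c) + t * t))%N -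
       Posz (\sum_(c in H) (t * a c + t * a (z^-1 * c)))%N)%R.
    rewrite /Rz !(big_morph Posz PoszD (erefl (Posz 0))) -sumrB.
    apply: eq_bigr => c _; rewrite /e !PoszD !PoszM; ring.
  rewrite !big_split /= sum_nat_const -!big_distrr /= sh sum_a auto // cH cardD.
  have [_|_] := eqVneq z 1.
    rewrite mul1n; apply/eqP; rewrite subr_eq -PoszD; apply/eqP; congr Posz.
    rewrite [(2 * n)%N]mulnC expnM -/q; move: key; nia.
  rewrite mul0n addn0; apply/eqP; rewrite subr_eq0; apply/eqP; congr Posz.
  move: key; nia.
have [x0 x0H [hx ex]] := coreZ pr_p n_gt0 abH expH hR.
have sume : (\sum_(c in H) e c = - Posz q)%R.
  rewrite /e sumrB -(big_morph Posz PoszD (erefl (Posz 0))) sum_a sumr_const cH cardD.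
  have -> : (Posz t *+ m)%R = Posz (t * m) by rewrite PoszM -mulr_natr natz.
  rewrite ht; lia.
have e0 : (\sum_(c in H) e c = e x0)%R.
  rewrite (bigD1 x0) //= big1 ?addr0 // => c /andP [cH' nc]; exact: hx.
have ax0 : (a x0 + q = t)%N.
  have : e x0 = (- Posz q)%R by rewrite -e0 sume.
  rewrite /e; move/eqP; rewrite subr_eq => /eqP E.
  apply/eqP; rewrite -eqz_nat PoszD E; apply/eqP; ring.
case/morphimP: x0H => x xN xG defx0.
exists x => // y yG.
have ay : #|D :&: U :* y| = a (coset U y).
  rewrite cardI_sum /a; apply: eq_bigr => d dD; congr nat_of_bool.
  apply/rcoset_kercosetP/eqP => //; first by apply: GN; apply: DG.
  exact: GN.
rewrite ay.
have -> : (U :* y == U :* x) = (coset U y == x0).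
  rewrite defx0; apply/eqP/eqP => [E|E].
    by apply/rcoset_kercosetP; rewrite ?GN // -E rcoset_refl.
  by apply/rcoset_eqP/rcoset_kercosetP; rewrite ?GN.
have [E|ne] := eqVneq (coset U y) x0; first by rewrite E muln1.
rewrite muln0 addn0.
have := hx (coset U y) (mem_quotient U yG) ne; rewrite /e; move/eqP.
by rewrite subr_eq0 eqz_nat => /eqP.
Qed.

End Pattern.

End Pat.
Import Pat.

Module Main.
Set Implicit Arguments. Unset Strict Implicit. Unset Printing Implicit Defensive.
Local Open Scope group_scope.

Lemma gcd_q (q : nat) : 0 < q -> gcdn (q + 1) (q ^ 2 + 1) %| 2.
Proof.
move=> q0; have -> : (q ^ 2 + 1 = (q - 1) * (q + 1) + 2)%N.
  by rewrite mulnBl mul1n mulnDr muln1 -mulnn; nia.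
by rewrite gcdnMDl dvdn_gcdr.
Qed.

Lemma hall_ord (gT : finGroupType) (G : {group gT}) (u r : nat) :
  solvable G -> (u * r = #|G|)%N -> coprime u r ->
  exists O : {group gT}, O \subset G /\ #|O| = u.
Proof.
move=> solG ur cur.
have [u0 r0] : 0 < u /\ 0 < r.
  by have := cardG_gt0 G; rewrite -ur muln_gt0 => /andP.
have [O hO] := Hall_exists \pi(u) solG.
exists O; split; first by case/andP: hO.
rewrite (card_Hall hO) -ur partnM // part_pnat_id ?pnat_pi //.
by rewrite part_p'nat ?muln1 // -coprime_pi'.
Qed.

Lemma coprime_of (a b : nat) : gcdn a b %| 2 -> odd a -> coprime a b.
Proof.
move=> dd oa; rewrite /coprime; have da := dvdn_gcdl a b.
move: (gcdn a b) da dd => [|[|[|d]]] //= da dd.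
by rewrite dvdn2 oa in da.
Qed.

Lemma exK (gT : finGroupType) (G : {group gT}) (q : nat) :
  abelian G -> 0 < q -> #|G| = ((q + 1) * (q ^ 2 + 1))%N ->
  exists K : {group gT}, K \subset G /\ #|K| = (q ^ 2 + 1)%N.
Proof.
move=> abG q0 cG.
have d2 := gcd_q q0.
have solG := abelian_sol abG.
case: (boolP (odd q)) => oq; last first.
  have E1 : ((q ^ 2 + 1) * (q + 1) = #|G|)%N by rewrite cG mulnC.
  apply: (hall_ord solG E1).
  apply: coprime_of; first by rewrite gcdnC.
  by rewrite oddD oddX (negbTE oq).
have hq := odd_double_half q; rewrite oq in hq.
move: (q./2) hq => k hq.
have ek : (q ^ 2 + 1 = (2 * (k * k + k) + 1) * 2)%N.
  by rewrite -hq -addn1 -muln2; nia.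
set u0 := (2 * (k * k + k) + 1)%N in ek.
have ou0 : odd u0 by rewrite /u0 oddD oddM.
have E1 : (u0 * (2 * (q + 1)) = #|G|)%N by rewrite cG ek; ring.
have [O [sOG cO]] : exists O : {group gT}, O \subset G /\ #|O| = u0.
  apply: (hall_ord solG E1).
  rewrite coprimeMr; apply/andP; split.
    by rewrite coprime_sym prime_coprime // dvdn2 ou0.
  apply: coprime_of => //.
  apply: (dvdn_trans _ d2); rewrite [gcdn u0 _]gcdnC dvdn_gcd dvdn_gcdl /= ek.
  by apply: dvdn_mulr; apply: dvdn_gcdr.
have d2G : 2 %| #|G| by rewrite cG ek; apply: dvdn_mull; apply: dvdn_mull.
have [z zG oz] := Cauchy (p := 2) (G := G) isT d2G.
have sZG : <[z]> \subset G by rewrite cycle_subG.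
exists (O <*> <[z]>)%G; split; first by rewrite join_subG sOG.
have cm : commute O <[z]>.
  by apply: normC; apply: subset_trans (sub_abelian_norm abG sZG).
rewrite /= comm_joingE // TI_cardMg; last first.
  by apply: coprime_TIg; rewrite cO -orderE oz coprime_sym prime_coprime // dvdn2 ou0.
by rewrite cO -orderE oz ek.
Qed.

End Main.
Import Main.

Local Open Scope group_scope.

Theorem theorem5p1 (q : nat) (gT : finGroupType) (G : {group gT}) (D : {set gT}) :
  prime_power q -> abelian G ->
  #|G| = ((q + 1) * (q ^ 2 + 1))%N ->
  difference_set G D ((q + 1) * (q ^ 2 + 1)) (q ^ 2 + q + 1) (q + 1) ->
  normalized D ->
  exists K : {group gT},
    [/\ K \subset G, #|K| = (q ^ 2 + 1)%N,
        (forall H : {group gT}, H \subset G -> #|H| = (q ^ 2 + 1)%N -> H = K) &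
        exists2 x, x \in G &
          #|D :&: K :* x| = 1%N /\
          (forall y, y \in G -> K :* y != K :* x -> #|D :&: K :* y| = (q + 1)%N)].
Proof.
move=> [p [n [pr_p [n_gt0 eq]]]] abG cG [_ sDG cD diff] _.
have q2 : (1 < q)%N.
  rewrite eq; apply: leq_trans (prime_gt1 pr_p) _.
  by rewrite -{1}(expn1 p) leq_pexp2l // prime_gt0.
have q0 : (0 < q)%N by lia.
have [K [sKG cK]] := exK abG q0 cG.
have idx : forall K' : {group gT}, K' \subset G -> #|K'| = (q ^ 2 + 1)%N ->
    #|G : K'| = (q + 1)%N.
  move=> K' sK'G cK'; have := Lagrange sK'G; rewrite cK' cG mulnC => E.
  by apply/eqP; rewrite -(eqn_pmul2r (_ : 0 < q ^ 2 + 1)%N) ?E // addn1.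
have expK : forall K' : {group gT}, K' \subset G -> #|K'| = (q ^ 2 + 1)%N ->
    forall g, g \in G -> g ^+ (q + 1) \in K'.
  move=> K' sK'G cK' g gG.
  have nK : G \subset 'N(K') := sub_abelian_norm abG sK'G.
  have cQ : #|G / K'| = (q + 1)%N by rewrite card_quotient // idx.
  have := expg_cardG (mem_quotient K' gG); rewrite cQ -morphX ?(subsetP nK) //=.
  by apply: coset_idr; rewrite groupX // (subsetP nK).
subst q.
exists K; split => //.
  move=> H' sH'G cH'; have [//|ne] := eqVneq H' K; exfalso.
  set q := (p ^ n)%N in cG cD diff expK idx cK cH' q2 q0 *.
  have nH : K \subset 'N(H') := subset_trans sKG (sub_abelian_norm abG sH'G).
  have cm : commute K H' := normC nH.
  have sJ : K <*> H' \subset G by rewrite join_subG sKG.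
  have mc := mul_cardG K H'; rewrite -comm_joingE // in mc.
  have dJ := cardSg sJ.
  have dU : #|K :&: H'| %| #|K| by apply: cardSg; apply: subsetIl.
  move: mc dJ dU; set u := #|K :&: H'|; set s := #|K <*> H'| => mc dJ.
  case/dvdnP => w hw.
  have u0 : (0 < u)%N by rewrite /u cardG_gt0.
  have hs : s = (w * (q ^ 2 + 1))%N.
    apply/eqP; rewrite -(eqn_pmul2r u0) -mc hw cH'; apply/eqP; ring.
  have wq : w %| q + 1.
    have pq : (0 < q ^ 2 + 1)%N by rewrite addn1.
    by rewrite -(dvdn_pmul2r pq) -hs -cG.
  have wq2 : w %| q ^ 2 + 1 by rewrite -cK hw dvdn_mulr.
  have w2 : w %| 2 by apply: dvdn_trans (gcd_q q0); rewrite dvdn_gcd wq wq2.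
  have w1 : w != 1%N.
    apply/eqP => w1; move/eqP: ne; apply; apply: val_inj => /=.
    have uK : u = #|K| by rewrite hw w1 mul1n.
    have e1 : K :&: H' = K.
      by apply/eqP; rewrite eqEcard subsetIl -/u uK leqnn.
    have e2 : K :&: H' = H'.
      by apply/eqP; rewrite eqEcard subsetIr -/u uK cK cH' leqnn.
    by rewrite -e2 e1.
  have ew : w = 2%N.
    have := dvdn_leq (isT : (0 < 2)%N) w2; move: w1 w2; case: w {hw hs wq wq2} => [|[|[|w]]] //.
  rewrite ew in hw wq.
  set U := (K :&: H')%G.
  have sUG : U \subset G by apply: subset_trans (subsetIl _ _) sKG.
  have hm : #|G : U| = (2 * (q + 1))%N.
    have := Lagrange sUG; rewrite /= -/u cG -cK hw => E.
    by apply/eqP; rewrite -(eqn_pmul2l u0) E; apply/eqP; ring.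
  set t := ((q + 1) %/ 2)%N.
  have t2 : (t * 2 = q + 1)%N by rewrite divnK.
  have ht : (t * #|G : U| = (q + 1) ^ 2)%N by rewrite hm mulnA t2; ring.
  have expU : forall g, g \in G -> g ^+ (q + 1) \in U.
    by move=> g gG; rewrite inE expK // expK.
  have [x xG hxy] := pattern pr_p n_gt0 abG sUG sDG cD diff expU ht cG.
  by have := hxy x xG; rewrite eqxx muln1; lia.
have ht : ((p ^ n + 1) * #|G : K| = (p ^ n + 1) ^ 2)%N by rewrite idx.
have [x xG hxy] := pattern pr_p n_gt0 abG sKG sDG cD diff (expK K sKG cK) ht cG.
exists x => //; split.
  by have := hxy x xG; rewrite eqxx muln1; lia.
move=> y yG ne; have := hxy y yG; rewrite (negbTE ne) muln0 addn0 //.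
Qed.
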